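(* Assume $n\ge 2$ and $\chi\neq\{0\}$. The reshuffling property and the strongly aggregate contributions property are independent: there exists a risk-sharing rule on $\chi^n$ that satisfies the reshuffling property but does not have strongly aggregate contributions, and there exists a risk-sharing rule on $\chi^n$ that has strongly aggregate contributions but does not satisfy the reshuffling property.
   Context: Fix a probability space $(\Omega,\mathcal{F},\mathbb{P})$ and an integer $n$. Let $\chi$ be a convex cone of non-negative random variables on this space (closed under addition and under multiplication by positive scalars) with $0\in\chi$. Equalities between random variables are understood almost surely. A pool is a vector $\boldsymbol{X}=(X_1,\ldots,X_n)\in\chi^n$, with aggregate loss $S_{\boldsymbol{X}}=\sum_{i=1}^n X_i$. A risk-sharing (RS) rule is a mapping $\boldsymbol{C}$ assigning to every pool $\boldsymbol{X}\in\chi^n$ a vector $\boldsymbol{C}[\boldsymbol{X}]=(C_1[\boldsymbol{X}],\ldots,C_n[\boldsymbol{X}])$ of real-valued random variables satisfying $\sum_{i=1}^n C_i[\boldsymbol{X}]=S_{\boldsymbol{X}}$. For a permutation $\pi$ of $\{1,\ldots,n\}$, $\boldsymbol{X}^\pi=(X_{\pi(1)},\ldots,X_{\pi(n)})$. Reshuffling property: $C_i[\boldsymbol{X}^\pi]=C_{\pi(i)}[\boldsymbol{X}]$ for all pools $\boldsymbol{X}$, permutations $\pi$ and indices $i$. Strongly aggregate contributions: there exists a single function $\mathbf{h}=(h_1,\ldots,h_n):\mathbb{R}\to\mathbb{R}^n$ (the same for all pools) such that $C_i[\boldsymbol{X}]=h_i(S_{\boldsymbol{X}})$ for every pool $\boldsymbol{X}$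 and every $i$. *)

(* Defs.v *)
From HB Require Import structures.
From mathcomp Require Import all_boot all_order all_algebra all_fingroup.
From mathcomp Require Import all_classical all_reals all_analysis.
Set Implicit Arguments. Unset Strict Implicit. Unset Printing Implicit Defensive.
Import Order.TTheory GRing.Theory Num.Theory.
Local Open Scope ring_scope.
Local Open Scope classical_set_scope.

Section RiskSharing.
Context (d : measure_display) (T : measurableType d) (R : realType)
  (P : probability T R) (n : nat).

Definition aeq (f g : T -> R) : Prop := {ae P, forall w, f w = g w}.

Definition is_cone (chi : set (T -> R)) : Prop :=
  [/\ (forall X, chi X -> measurable_fun setT X /\ (forall w, 0 <= X w)),
      chi (fun _ => 0),
      (forall X Y, chi X -> chi Y -> chi (fun w => X w + Y w)) &
      (forall (c : R) X, 0 < c -> chi X -> chi (fun w => c * X w))].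

Definition is_pool (chi : set (T -> R)) (X : 'I_n -> T -> R) : Prop :=
  forall i, chi (X i).

Definition aggregate (X : 'I_n -> T -> R) : T -> R :=
  fun w => \sum_(i < n) X i w.

Definition reshuffle (X : 'I_n -> T -> R) (s : 'S_n) : 'I_n -> T -> R :=
  fun i => X (s i).

Definition is_RS_rule (chi : set (T -> R))
  (C : ('I_n -> T -> R) -> 'I_n -> T -> R) : Prop :=
  forall X, is_pool chi X ->
    (forall i, measurable_fun setT (C X i)) /\
    aeq (fun w => \sum_(i < n) C X i w) (aggregate X).

Definition reshuffling_property (chi : set (T -> R))
  (C : ('I_n -> T -> R) -> 'I_n -> T -> R) : Prop :=
  forall X (s : 'S_n) (i : 'I_n), is_pool chi X ->
    aeq (C (reshuffle X s) i) (C X (s i)).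

Definition strongly_aggregate (chi : set (T -> R))
  (C : ('I_n -> T -> R) -> 'I_n -> T -> R) : Prop :=
  exists h : R -> 'I_n -> R, forall X (i : 'I_n), is_pool chi X ->
    aeq (C X i) (fun w => h (aggregate X w) i).

End RiskSharing.

(* Main.v *)
Require Import Defs.
From HB Require Import structures.
From mathcomp Require Import all_boot all_order all_algebra all_fingroup.
From mathcomp Require Import all_classical all_reals all_analysis.
Import Order.TTheory GRing.Theory Num.Theory.
Local Open Scope ring_scope.
Local Open Scope classical_set_scope.

Lemma aeq_refl' d (T : measurableType d) (R : realType) (P : probability T R)
  (f g : T -> R) : (forall w, f w = g w) -> aeq P f g.
Proof. by move=> h; apply: aeW. Qed.

Lemma aeq_trans3 d (T : measurableType d) (R : realType) (P : probability T R)
  (f g h : T -> R) : aeq P f h -> aeq P g h -> aeq P f g.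
Proof. by move=> A B; apply: filterS2 A B => x -> ->. Qed.

Lemma sum_perm (R : realType) (n : nat) (F : 'I_n -> R) (s : 'S_n) :
  \sum_(i < n) F (s i) = \sum_(i < n) F i.
Proof. by rewrite [RHS](reindex_inj (@perm_inj _ s)). Qed.

Theorem proposition3 (d : measure_display) (T : measurableType d)
  (R : realType) (P : probability T R) (n : nat) (chi : set (T -> R)) :
  (1 < n)%N ->
  is_cone chi ->
  (exists X, chi X /\ ~ aeq P X (fun _ => 0)) ->
  (exists C : ('I_n -> T -> R) -> 'I_n -> T -> R, is_RS_rule P chi C /\ reshuffling_property P chi C /\
             ~ strongly_aggregate P chi C) /\
  (exists C : ('I_n -> T -> R) -> 'I_n -> T -> R, is_RS_rule P chi C /\ strongly_aggregate P chi C /\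
             ~ reshuffling_property P chi C).
Proof.
move=> hn [hmeas h0 _ _] [X [chiX nX]].
have i0lt : (0 < n)%N by apply: ltn_trans hn.
pose i0 : 'I_n := Ordinal i0lt.
pose i1 : 'I_n := Ordinal hn.
have i01 : i0 != i1 by [].
pose e (j : 'I_n) : 'I_n -> T -> R := fun i => if i == j then X else (fun _ => 0).
have pe j : is_pool chi (e j) by move=> i; rewrite /e; case: (i == j).
have agge j w : aggregate (e j) w = X w.
  rewrite /aggregate (bigD1 j) //= /e eqxx big1 ?addr0 // => i /negbTE ->.
  by [].
split.
- exists (fun Y => Y); split; [|split].
  + move=> Y pY; split; first by move=> i; exact: (hmeas _ (pY i)).1.
    exact: aeq_refl'.
  + by move=> Y s i pY; exact: aeq_refl'.
  + move=> [h hh]; apply: nX.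
    have A := hh (e i0) i0 (pe i0).
    have B := hh (e i1) i0 (pe i1).
    have A' : aeq P X (fun w => h (X w) i0).
      apply: filterS A => w; rewrite /e eqxx agge //.
    have B' : aeq P (fun _ => 0) (fun w => h (X w) i0).
      apply: filterS B => w; rewrite /e (negbTE i01) agge //.
    exact: aeq_trans3 A' B'.
- exists (fun Y i w => if i == i0 then aggregate Y w else 0); split; [|split].
  + move=> Y pY; split.
      move=> i; case: (i == i0); last exact: measurable_cst.
      by apply: measurable_sum => j; exact: (hmeas _ (pY j)).1.
    apply: aeq_refl' => w.
    rewrite (bigD1 i0) //= ?eqxx big1 ?addr0 // => i /negbTE -> //.
  + exists (fun s i => if i == i0 then s else 0) => Y i _.
    exact: aeq_refl'.
  + move=> hr; apply: nX.
    have A := hr (e i0) (tperm i0 i1) i0 (pe i0).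
    apply: filterS A => w /=; case: ifP => E; last first.
      have -> : aggregate (reshuffle (e i0) (tperm i0 i1)) w = aggregate (e i0) w.
        change (\sum_(i < n) e i0 (tperm i0 i1 i) w = \sum_(i < n) e i0 i w).
        exact: (@sum_perm R n (fun i => e i0 i w) (tperm i0 i1)).
      by rewrite agge.
    exfalso; move/eqP: E => E.
    have : tperm i0 i1 i0 = tperm i0 i1 i1 by rewrite E tpermR.
    by move/perm_inj => /eqP; rewrite (negbTE i01).

Qed.
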